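(* For every $s\ge 1$ the sequence $N\mapsto \alpha_{N,s}$ ($N\ge 2$) is non-decreasing: $\alpha_{N,s}\le\alpha_{N+1,s}$ for all $N\ge 2$.
   Context: For $N\ge 2$ and $s\ge 1$, $$\alpha_{N,s} := \inf\left\{\frac{\sum_{1\le j<k\le N}\frac{|x_j|^s+|x_k|^s}{|x_j-x_k|}}{(N-1)\sum_{k=1}^N|x_k|^{s-1}} : x_1,\dots,x_N\in\mathbb{R}^3 \text{ pairwise distinct}\right\},$$ with the convention $|x|^0=1$ (also for $x=0$) when $s=1$. *)

(* Defs.v *)
From HB Require Import structures.
From mathcomp Require Import all_boot all_order all_algebra.
From mathcomp Require Import all_classical all_reals.
From mathcomp Require Import exp.
Set Implicit Arguments. Unset Strict Implicit. Unset Printing Implicit Defensive.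
Import Order.TTheory GRing.Theory Num.Theory.
Local Open Scope ring_scope.
Local Open Scope classical_set_scope.

Definition enorm (R : realType) (x : 'rV[R]_3) : R :=
  Num.sqrt (\sum_(i < 3) x ord0 i ^+ 2).

(* The ratio in the definition of alpha_{N,s}.  Powers use powR, for which
   0 `^ 0 = 1 and 0 `^ t = 0 for t <> 0, matching the convention |x|^0 = 1. *)
Definition alpha_ratio (R : realType) (N : nat) (s : R)
    (x : 'I_N -> 'rV[R]_3) : R :=
  (\sum_(j < N) \sum_(k < N | (j < k)%N)
      ((enorm (x j)) `^ s + (enorm (x k)) `^ s) / enorm (x j - x k))
  / ((N.-1)%:R * \sum_(k < N) (enorm (x k)) `^ (s - 1)).

Definition alpha (R : realType) (N : nat) (s : R) : R :=
  inf [set r : R | exists x : 'I_N -> 'rV[R]_3,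
                     injective x /\ r = @alpha_ratio R N s x].

(* Main.v *)
Require Import Defs.
From HB Require Import structures.
From mathcomp Require Import all_boot all_order all_algebra.
From mathcomp Require Import all_classical all_reals.
From mathcomp Require Import exp.
From mathcomp Require Import lra zify.
Import Order.TTheory GRing.Theory Num.Theory.
Local Open Scope ring_scope.

Section Aux.
Variable R : realType.

Lemma bump_ltn h j k : (bump h j < bump h k)%N = (j < k)%N.
Proof. rewrite /bump; case: leqP; case: leqP; lia. Qed.

Lemma num_lift n (g : 'I_n.+1 -> 'I_n.+1 -> R) (i : 'I_n.+1) :
  \sum_(j < n) \sum_(k < n | (j < k)%N) g (lift i j) (lift i k) =
  \sum_(j < n.+1) \sum_(k < n.+1)
     (if [&& (j < k)%N, j != i & k != i] then g j k else 0).
Proof.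
rewrite [RHS](bigD1_ord i) //= [X in _ = X + _]big1 ?add0r; last by move=> k _; rewrite eqxx !andbF.
apply: eq_bigr => j _; rewrite [RHS](bigD1_ord i) //= eqxx !andbF add0r big_mkcond /=.
by apply: eq_bigr => k _; rewrite bump_ltn !lift_eqF /= ?andbT.
Qed.

Lemma den_lift n (h : 'I_n.+1 -> R) (i : 'I_n.+1) :
  \sum_(k < n) h (lift i k) = \sum_(k < n.+1) (if k != i then h k else 0).
Proof. by rewrite [RHS](bigD1_ord i) //= eqxx add0r; apply: eq_bigr => k _; rewrite lift_eqF. Qed.

Lemma sum_if1 n (j : 'I_n) (c : R) : \sum_(i < n) (if i == j then c else 0) = c.
Proof. by rewrite -big_mkcond big_pred1_eq. Qed.

Lemma count2 n (j k : 'I_n) (c : R) : j != k ->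
  \sum_(i < n) (if (j != i) && (k != i) then c else 0) = c * (n%:R - 2).
Proof.
move=> jk.
have -> : \sum_(i < n) (if (j != i) && (k != i) then c else 0) =
  \sum_(i < n) (c - (if i == j then c else 0) - (if i == k then c else 0)).
  apply: eq_bigr => i _; case: (eqVneq i j) => [->|ij].
    by rewrite ?eqxx (negbTE jk) /=; lra.
  case: (eqVneq i k) => [_|ik]; first by rewrite /= ?andbF; lra.
  by rewrite /=; lra.
rewrite !sumrB sum_if1 sum_if1 sumr_const card_ord -mulr_natr; lra.
Qed.

Lemma count1 n (k : 'I_n) (c : R) :
  \sum_(i < n) (if k != i then c else 0) = c * (n%:R - 1).
Proof.
have -> : \sum_(i < n) (if k != i then c else 0) =
  \sum_(i < n) (c - (if i == k then c else 0)).
  by apply: eq_bigr => i _; rewrite eq_sym; case: eqP => _ /=; lra.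
rewrite !sumrB sum_if1 sumr_const card_ord -mulr_natr; lra.
Qed.


Lemma enorm_ge0 (z : 'rV[R]_3) : 0 <= enorm z.
Proof. exact: sqrtr_ge0. Qed.

Lemma enorm_gt0 (z : 'rV[R]_3) : z != 0 -> 0 < enorm z.
Proof.
move=> z0; rewrite /enorm sqrtr_gt0.
case: (pickP (fun j => z ord0 j != 0)) => [j zj|H]; last first.
  case/negP: z0; apply/eqP/rowP => j; rewrite mxE.
  by move/negbFE/eqP: (H j).
rewrite (bigD1 j) //=.
have h1 : 0 < z ord0 j ^+ 2 by rewrite lt_neqAle sqr_ge0 andbT eq_sym sqrf_eq0.
have h2 : 0 <= \sum_(i < 3 | i != j) z ord0 i ^+ 2 by apply: sumr_ge0 => i _; exact: sqr_ge0.
lra.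
Qed.

Lemma ratio_ge0 n (s : R) (x : 'I_n -> 'rV[R]_3) : 0 <= alpha_ratio s x.
Proof.
apply: divr_ge0.
  apply: sumr_ge0 => j _; apply: sumr_ge0 => k _; apply: divr_ge0; last exact: enorm_ge0.
  by apply: addr_ge0; exact: powR_ge0.
apply: mulr_ge0; first exact: ler0n.
by apply: sumr_ge0 => k _; exact: powR_ge0.
Qed.

Lemma hasLB n (s : R) : has_lbound [set r : R | exists x : 'I_n -> 'rV[R]_3,
                     injective x /\ r = alpha_ratio s x].
Proof. by exists 0 => r [x [_ ->]]; exact: ratio_ge0. Qed.

Lemma den_gt0 M (s : R) (y : 'I_M.+2 -> 'rV[R]_3) : injective y ->
  0 < \sum_(k < M.+2) enorm (y k) `^ (s - 1).
Proof.
move=> yinj.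
have [k yk] : exists k, y k != 0.
  case: (eqVneq (y ord0) 0) => [y0|]; last by exists ord0.
  exists ord_max; rewrite -y0; apply/eqP => /yinj /(congr1 val) /=; lia.
rewrite (bigD1 k) //=.
have h1 : 0 < enorm (y k) `^ (s - 1) by apply: powR_gt0; exact: enorm_gt0.
have h2 : 0 <= \sum_(i < M.+2 | i != k) enorm (y i) `^ (s - 1).
  by apply: sumr_ge0 => i _; exact: powR_ge0.
lra.
Qed.


Lemma key M (s : R) (x : 'I_M.+3 -> 'rV[R]_3) : injective x ->
  alpha M.+2 s <= alpha_ratio s x.
Proof.
move=> xinj.
pose g := fun j k : 'I_M.+3 => (enorm (x j) `^ s + enorm (x k) `^ s) / enorm (x j - x k).
pose h := fun k : 'I_M.+3 => enorm (x k) `^ (s - 1).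
pose a := alpha M.+2 s.
have Hi : forall i : 'I_M.+3,
  a * ((M.+1)%:R * \sum_(k < M.+3) (if k != i then h k else 0)) <=
  \sum_(j < M.+3) \sum_(k < M.+3) (if [&& (j < k)%N, j != i & k != i] then g j k else 0).
  move=> i; pose y := fun j : 'I_M.+2 => x (lift i j).
  have yinj : injective y by move=> j1 j2 /xinj /lift_inj.
  have Dpos := @den_gt0 M s y yinj.
  have Ha : a <= alpha_ratio s y.
    by apply: (ge_inf (hasLB M.+2 s)); exists y.
  move: Ha; rewrite /alpha_ratio /= ler_pdivlMr; last by apply: mulr_gt0 => //; rewrite ltr0n.
  rewrite (@num_lift M.+2 g i) (@den_lift M.+2 h i) mulrA.
  by [].
have Hs : \sum_(i < M.+3) (a * ((M.+1)%:R * \sum_(k < M.+3) (if k != i then h k else 0))) <=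
  \sum_(i < M.+3) \sum_(j < M.+3) \sum_(k < M.+3) (if [&& (j < k)%N, j != i & k != i] then g j k else 0).
  by apply: ler_sum => i _; exact: Hi.
have E1 : \sum_(i < M.+3) \sum_(j < M.+3) \sum_(k < M.+3)
    (if [&& (j < k)%N, j != i & k != i] then g j k else 0) =
    (M.+1)%:R * \sum_(j < M.+3) \sum_(k < M.+3 | (j < k)%N) g j k.
  rewrite exchange_big /=; under eq_bigr => j _ do rewrite exchange_big /=.
  rewrite mulr_sumr; apply: eq_bigr => j _; rewrite mulr_sumr [RHS]big_mkcond /=.
  apply: eq_bigr => k _; case: ifP => jk /=; last by rewrite big1 ?mulr0.
  rewrite count2; last by apply/eqP => e; move: jk; rewrite e ltnn.
  rewrite -[(M.+3)%:R]natr1 -[(M.+2)%:R]natr1; lra.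
have E2 : \sum_(i < M.+3) \sum_(k < M.+3) (if k != i then h k else 0) =
    (M.+2)%:R * \sum_(k < M.+3) h k.
  rewrite exchange_big /= mulr_sumr; apply: eq_bigr => k _.
  rewrite count1 -[(M.+3)%:R]natr1; lra.
rewrite E1 -mulr_sumr -mulr_sumr E2 in Hs.
have Ppos := @den_gt0 M.+1 s x xinj.
rewrite /alpha_ratio /= ler_pdivlMr; last by apply: mulr_gt0 => //; rewrite ltr0n.
move: Hs Ppos; rewrite -/a.
set P := \sum_(k < M.+3) _.
set Q := \sum_(j < M.+3) _.
have c1 : 0 < (M.+1)%:R :> R by rewrite ltr0n.
move: c1; set c := (M.+1)%:R; set d := (M.+2)%:R.
rewrite /P /h => c1 Hs Ppos.
nra.
Qed.

End Aux.

Theorem lemma3p1 (R : realType) (s : R) (N : nat) :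
  1 <= s -> (2 <= N)%N -> @alpha R N s <= @alpha R N.+1 s.
Proof.
move=> _; case: N => [|[|M]] // _.
apply: lb_le_inf.
  pose x0 := fun i : 'I_M.+3 => (const_mx (i%:R : R) : 'rV[R]_3).
  exists (alpha_ratio s x0); exists x0; split => //.
  move=> i j /(congr1 (fun m : 'rV[R]_3 => m ord0 ord0)); rewrite /x0 !mxE.
  by move/eqP; rewrite eqr_nat => /eqP /val_inj.
by move=> r [x [xinj ->]]; exact: key.
Qed.
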